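(* Consider any fair, well-formed execution of COP as described in the context, with history $\sigma$ (and $S$ correct or Byzantine). For each client $C_i$, the sequence $\pi_i$ defined in the context preserves the real-time order of $\sigma$: for any two operations $o,o'$ in $\pi_i$, if $o$ completes before $o'$ is invoked in $\sigma$, then $o$ appears before $o'$ in $\pi_i$.
   Context: System model. Clients $C_1,\dots,C_n$ and server $S$ in an asynchronous system, each client connected to $S$ by a reliable FIFO channel; clients are correct; $S$ is correct or Byzantine (may send arbitrary messages). Executions are fair and well-formed. Functionality. $F$ is deterministic over states $\mathcal{S}$, operations $\mathcal{O}$, responses $\mathcal{R}$: $F(s,o)=(s',r)$, extended to sequences by applying operations in order. $\mathrm{commute}_F(s,\rho_1,\rho_2)$ is true iff every interleaving of sequences $\rho_1,\rho_2$ (preserving each one's internal order) executed from $s$ yields the same final state and the same respective responses. Cryptography (ideal). $\mathrm{hash}$ is ideal collision-free; $\mathrm{sign}_i$ is invocable only by $C_i$ and $\mathrm{verify}_i(\phi,m)$ is true iff $C_i$ previously executed $\mathrm{sign}_i(m)$ obtaining $\phi$. $\|$ is concatenation. COP client $C_i$. State: $u$ (initially $\bot$); $c$ (initially $0$); map $H$ with $H[0]=\mathrm{null}$; map $Z$ to $\{\mathrm{success},\mathrm{abort}\}$; state $s$ (initially $s_0$). (1) On invocation of $o$: $u\leftarrow o$, send $\langle\mathrm{invoke},o,c,\mathrm{sign}_i(\mathrm{invoke}\|o\|i)\rangle$ to $S$. (2) On $\langle\mathrm{reply},\omega\rangle$: $\gamma,\mu\leftarrow\langle\rangle$. For $k=1,\dots,\mathrm{length}(\omega)$: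 $(o,j,\tau)=\omega[k]$, $l=c+k$; halt if $\mathrm{verify}_j(\tau,\mathrm{invoke}\|o\|j)$ fails; if $H[l]$ undefined set $H[l]\leftarrow\mathrm{hash}(H[l-1]\|o\|l\|j)$, else halt if $H[l]\neq\mathrm{hash}(H[l-1]\|o\|l\|j)$; if $j=i$ and $Z[l]=\mathrm{success}$ append $o$ to $\mu$, else if $j\neq i$ append $o$ to $\gamma$. Halt if $\omega$ is empty or its last entry has operation $\neq u$ or index $\neq i$. $(a,r)\leftarrow F(s,\mu)$. If $\mathrm{commute}_F(a,\langle u\rangle,\gamma)$: $(a,r)\leftarrow F(a,u)$, $Z[l]\leftarrow\mathrm{success}$; else $r\leftarrow\bot$, $Z[l]\leftarrow\mathrm{abort}$. Send $\langle\mathrm{commit},u,l,H[l],Z[l],\mathrm{sign}_i(\mathrm{commit}\|u\|l\|H[l]\|Z[l])\rangle$ to $S$, set $u\leftarrow\bot$, output $r$. (3) On $\langle\mathrm{broadcast},o,q,h,z,\phi,j\rangle$: halt unless $q=c+1$ and $\mathrm{verify}_j(\phi,\mathrm{commit}\|o\|q\|h\|z)$; if $H[q]$ undefined set $H[q]\leftarrow\mathrm{hash}(H[q-1]\|o\|q\|j)$; halt if $h\neq H[q]$; if $z=\mathrm{success}$, $(s,\cdot)\leftarrow F(s,o)$; $c\leftarrow c+1$. COP server $S$ (when correct). State $t=0$, $b=0$, maps $I,O$ empty. On $\langle\mathrm{invoke},o,c,\tau\rangle$ from $C_i$: $t\leftarrow t+1$, $I[t]\leftarrow(o,i,\tau)$,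 send $\langle\mathrm{reply},\langle I[c+1],\dots,I[t]\rangle\rangle$ to $C_i$. On $\langle\mathrm{commit},o,q,h,z,\phi\rangle$ from $C_i$: $O[q]\leftarrow(o,h,z,\phi,i)$; while $O[b+1]$ defined: $b\leftarrow b+1$, send $\langle\mathrm{broadcast},o',b,h',z',\phi',j\rangle$ to all clients where $(o',h',z',\phi',j)=O[b]$. Terminology. The history $\sigma$ is the sequence of invocation/response events at the clients. $C_i$ commits $o$ when it issues the commit signature in step (2); the value $l$ there is the sequence number of $o$. A client confirms $o$ when it processes a broadcast message for $o$ in step (3) passing all checks. Definition of $\pi_i$: let $o$ be the operation committed by $C_i$ with the highest sequence number among those operations of $C_i$ that have been confirmed by some client $C_k$ (possibly $C_k=C_i$); let $\alpha_i$ be the sequence of operations confirmed by $C_k$ up to and including $o$; let $\beta_i$ be the sequence of operations committed by $C_i$ with sequence number higher than that of $o$, in order of sequence number; $\pi_i=\alpha_i\circ\beta_i$ (concatenation). *)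

(* Defs.v *)
(* A symbolic model of the COP protocol (clients correct,
   server Byzantine = completely arbitrary), with ideal hash (free term
   constructor, hence collision-free) and ideal signatures (symbolic, checked
   against the global log of signatures produced so far). *)
From mathcomp Require Import all_boot.
From Stdlib Require List.

Set Implicit Arguments.
Unset Strict Implicit.
Unset Printing Implicit Defensive.

Section COP.

Variable n : nat.
Variable Op : eqType.
Variables St Rsp : Type.
Variable F : St -> Op -> St * Rsp.
Variable s0 : St.

Definition client := 'I_n.

Fixpoint Fseq (s : St) (rho : seq Op) : St * seq Rsp :=
  match rho with
  | [::] => (s, [::])
  | o :: rho' => let (s1, r) := F s o in
                 let (s2, rs) := Fseq s1 rho' in (s2, r :: rs)
  end.

(* Execute an interleaving of rho1 and rho2 given by a schedule
   (true = next op of rho1, false = next op of rho2); returns the final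
   state and the respective responses of rho1 and rho2. *)
Fixpoint run_sched (s : St) (sch : seq bool) (rho1 rho2 : seq Op)
  : St * seq Rsp * seq Rsp :=
  match sch with
  | [::] => (s, [::], [::])
  | true :: sch' =>
      match rho1 with
      | [::] => (s, [::], [::])
      | o :: rho1' => let (s1, r) := F s o in
          let '(s2, r1, r2) := run_sched s1 sch' rho1' rho2 in (s2, r :: r1, r2)
      end
  | false :: sch' =>
      match rho2 with
      | [::] => (s, [::], [::])
      | o :: rho2' => let (s1, r) := F s o in
          let '(s2, r1, r2) := run_sched s1 sch' rho1 rho2' in (s2, r1, r :: r2)
      end
  end.

Definition interleaving (sch : seq bool) (rho1 rho2 : seq Op) : Prop :=
  count id sch = size rho1 /\ count negb sch = size rho2.

Definition commuteF (s : St) (rho1 rho2 : seq Op) : Prop :=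
  forall sch sch', interleaving sch rho1 rho2 -> interleaving sch' rho1 rho2 ->
    run_sched s sch rho1 rho2 = run_sched s sch' rho1 rho2.

Inductive zval := Zsuccess | Zabort.

(* ideal (collision-free) hash values: hash(H[l-1] || o || l || j).
   H[l-1] may in principle be undefined, hence the option. *)
Inductive hval :=
| Hnull
| Hash of option hval & Op & nat & client.

(* signed messages: invoke||o||i  and  commit||o||l||h||z *)
Inductive payload :=
| PInv of Op & client
| PCom of Op & nat & option hval & zval.

(* ideal signature: sign_j(m) yields the symbolic value (j, m) *)
Definition sigval := (client * payload)%type.

(* verify_j(phi, m): C_j previously executed sign_j(m) obtaining phi *)
Definition verify (log : seq sigval) (j : client) (phi : sigval) (m : payload) : Prop :=
  phi = (j, m) /\ List.In (j, m) log.

Inductive smsg :=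
| MReply of seq (Op * client * sigval)
| MBcast of Op & nat & option hval & zval & sigval & client.

Record cstate := CState {
  cu : option Op;                (* u, None = bottom *)
  cc : nat;
  cH : nat -> option hval;
  cZ : nat -> option zval;
  cs : St;
  chalt : bool
}.

Definition cinit : cstate :=
  CState None 0 (fun l => if l == 0 then Some Hnull else None) (fun _ => None) s0 false.

Definition upd {A} (f : nat -> A) (l : nat) (v : A) : nat -> A :=
  fun x => if x == l then v else f x.

(* The loop of step (2), for k = k0, k0+1, ... : returns the updated H,
   gamma, mu, and the conjunction of all checks (a failing check = halt). *)
Fixpoint scan (i : client) (log : seq sigval) (c k : nat)
  (H : nat -> option hval) (Z : nat -> option zval) (w : seq (Op * client * sigval))
  : (nat -> option hval) * seq Op * seq Op * Prop :=
  match w with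
  | [::] => (H, [::], [::], True)
  | (o, j, tau) :: w' =>
      let l := c + k in
      let hl := Hash (H (l - 1)) o l j in
      let ok1 := verify log j tau (PInv o j) /\ (forall x, H l = Some x -> x = hl) in
      let H1 := if H l is None then upd H l (Some hl) else H in
      let '(H', g, m, ok') := scan i log c k.+1 H1 Z w' in
      let g' := if j == i then g else o :: g in
      let m' := if (j == i) && (if Z l is Some Zsuccess then true else false)
                then o :: m else m in
      (H', g', m', ok1 /\ ok')
  end.

Inductive obs :=
| OInv of client & Op
| ORes of client & Op & option Rsp
| OCommit of client & Op & nat
| OConfirm of client & Op & nat & client. (* C_k confirms o (seq q, committer j) *)

Record world := World { wcl : client -> cstate; wlog : seq sigval }.

Definition winit : world := World (fun _ => cinit) [::].

Definition setcl (w : world) (i : client) (st : cstate) (log : seq sigval) : world :=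
  World (fun x => if x == i then st else wcl w x) log.

Inductive step : world -> world -> seq obs -> Prop :=
(* (1) invocation (well-formed: only when the previous op completed) *)
| StInvoke w i o :
    cu (wcl w i) = None ->
    let st := wcl w i in
    step w (setcl w i (CState (Some o) (cc st) (cH st) (cZ st) (cs st) (chalt st))
                 (if chalt st then wlog w else rcons (wlog w) (i, PInv o i)))
         [:: OInv i o]
| StReply w i om u tau z r H' g m (ok : Prop) :
    let st := wcl w i in
    chalt st = false ->
    scan i (wlog w) (cc st) 1 (cH st) (cZ st) (rcons om (u, i, tau)) = (H', g, m, ok) ->
    ok ->
    cu st = Some u ->
    let l := cc st + size (rcons om (u, i, tau)) in
    let a := (Fseq (cs st) m).1 in
    (commuteF a [:: u] g /\ z = Zsuccess /\ r = Some (F a u).2) \/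
    (~ commuteF a [:: u] g /\ z = Zabort /\ r = None) ->
    step w (setcl w i (CState None (cc st) H' (upd (cZ st) l (Some z)) (cs st) false)
                 (rcons (wlog w) (i, PCom u l (H' l) z)))
         [:: OCommit i u l; ORes i u r]
| StReplyHalt w i om H' g m (ok : Prop) :
    let st := wcl w i in
    chalt st = false ->
    scan i (wlog w) (cc st) 1 (cH st) (cZ st) om = (H', g, m, ok) ->
    ~ (ok /\ exists om' u tau, om = rcons om' (u, i, tau) /\ cu st = Some u) ->
    step w (setcl w i (CState (cu st) (cc st) (cH st) (cZ st) (cs st) true) (wlog w)) [::]
| StBcast w i o q h z phi j :
    let st := wcl w i in
    chalt st = false ->
    q = cc st + 1 ->
    verify (wlog w) j phi (PCom o q h z) ->
    let H1 := if cH st q is None then upd (cH st) q (Some (Hash (cH st (q - 1)) o q j))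
              else cH st in
    h = H1 q ->
    step w (setcl w i (CState (cu st) q H1 (cZ st)
                          (if z is Zsuccess then (F (cs st) o).1 else cs st) false) (wlog w))
         [:: OConfirm i o q j]
| StBcastHalt w i o q h z phi j :
    let st := wcl w i in
    chalt st = false ->
    ~ (q = cc st + 1 /\ verify (wlog w) j phi (PCom o q h z) /\
       h = (if cH st q is None then upd (cH st) q (Some (Hash (cH st (q - 1)) o q j))
            else cH st) q) ->
    step w (setcl w i (CState (cu st) (cc st) (cH st) (cZ st) (cs st) true) (wlog w)) [::].

Inductive reachable : world -> seq obs -> Prop :=
| Reach0 : reachable winit [::]
| ReachStep w tr w' ev : reachable w tr -> step w w' ev -> reachable w' (tr ++ ev).

Definition invoked_ops (tr : seq obs) : seq Op :=
  pmap (fun e => if e is OInv _ o then Some o else None) tr.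

Definition completes_before (tr : seq obs) (o o' : Op) : Prop :=
  exists tr1 tr2 tr3 i j r, tr = tr1 ++ ORes i o r :: tr2 ++ OInv j o' :: tr3.

Definition committed (tr : seq obs) (i : client) (o : Op) (l : nat) : Prop :=
  List.In (OCommit i o l) tr.

Definition confirmed_by (tr : seq obs) (k : client) (o : Op) : Prop :=
  exists q j, List.In (OConfirm k o q j) tr.

Definition confirms (tr : seq obs) (k : client) : seq Op :=
  pmap (fun e => if e is OConfirm k' o _ _ then (if k' == k then Some o else None)
                 else None) tr.

Definition commits_of (tr : seq obs) (i : client) : seq (Op * nat) :=
  pmap (fun e => if e is OCommit i' o l then (if i' == i then Some (o, l) else None)
                 else None) tr.

Definition commits_sorted (tr : seq obs) (i : client) (P : nat -> bool) : seq Op :=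
  map fst (sort (fun a b : Op * nat => a.2 <= b.2)
                (filter (fun a : Op * nat => P a.2) (commits_of tr i))).

(* pi_i (relational: any admissible choice of o and C_k) *)
Definition cop_pi (tr : seq obs) (i : client) (pi : seq Op) : Prop :=
  (exists o l k,
     committed tr i o l /\ confirmed_by tr k o /\
     (forall o2 l2 k2, committed tr i o2 l2 -> confirmed_by tr k2 o2 -> l2 <= l) /\
     pi = take (index o (confirms tr k)).+1 (confirms tr k)
          ++ commits_sorted tr i (fun l2 => l < l2))
  \/
  ((forall o2 l2 k2, committed tr i o2 l2 -> ~ confirmed_by tr k2 o2) /\
   pi = commits_sorted tr i (fun _ => true)).

End COP.

(* Main.v *)
Require Import Defs.
From mathcomp Require Import all_boot zify.
From Stdlib Require List.

Set Implicit Arguments.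
Unset Strict Implicit.
Unset Printing Implicit Defensive.

Section Main.
Variable n : nat.
Variable Op : eqType.
Variables St Rsp : Type.
Variable F : St -> Op -> St * Rsp.
Variable s0 : St.

Notation cl := (client n).
Notation hv := (hval n Op).
Notation sv := (sigval n Op).

Fixpoint encr (s : seq (Op * cl)) : hv :=
  match s with
  | [::] => Hnull _ _
  | x :: s' => Hash (Some (encr s')) x.1 (size s').+1 x.2
  end.
Definition enc s := encr (rev s).

Lemma enc_rcons s x : enc (rcons s x) = Hash (Some (enc s)) x.1 (size s).+1 x.2.
Proof. by rewrite /enc rev_rcons /= size_rev. Qed.

Lemma encr_inj : injective encr.
Proof.
elim=> [|x s IH] [|y t] //= [] E1 E2 E3 E4.
by rewrite (IH _ E1); case: x y E2 E4 {E1 E3} => ? ? [? ?] /= -> ->.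
Qed.

Lemma enc_inj : injective enc.
Proof. by move=> s t /encr_inj E; rewrite -(revK s) E revK. Qed.

Definition view (H : nat -> option hv) (V : seq (Op * cl)) :=
  forall l, H l = if l <= size V then Some (enc (take l V)) else None.

Definition Pinv (log : seq sv) (x : Op * cl) := List.In (x.2, PInv x.1 x.2) log.

Lemma take_last_ex (V : seq (Op * cl)) l : 0 < l -> l <= size V ->
  exists x, take l V = rcons (take l.-1 V) x.
Proof.
move=> Hl; case: V => [|y V] Hs; first by rewrite /= in Hs; lia.
exists (nth y (y :: V) l.-1).
by rewrite -(take_nth y) ?prednK //; lia.
Qed.

Lemma take_rcons_le (V : seq (Op*cl)) x l : l <= size V -> take l (rcons V x) = take l V.
Proof. by move=> H; rewrite -cats1 takel_cat. Qed.

Lemma scanP i log c w : forall k H Z V H' g m ok,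
  view H V -> c + k <= (size V).+1 -> 0 < k ->
  (forall x, x \in V -> Pinv log x) ->
  scan i log c k H Z w = (H', g, m, ok) -> ok ->
  exists V', [/\ view H' V', take (size V) V' = V,
     (c + k).-1 + size w <= size V' /\ size V <= size V',
     (forall x, x \in V' -> Pinv log x) &
     (forall mm o j tau, onth w mm = Some (o, j, tau) ->
        take (c + k + mm) V' = rcons (take (c + k + mm).-1 V') (o, j))].
Proof.
elim: w => [|[[o j] tau] w IH] k H Z V H' g m ok HV Hck Hk HP /=.
  case=> <- _ _ _ _; exists V; split=> //; first by rewrite take_size.
  - by rewrite addn0; split=> //; lia.
  - by move=> ? ? ? ?; rewrite onth0n.
set l := c + k.
set hl := Hash (H (l - 1)) o l j.
case E: (scan _ _ _ _ _ _ _) => [[[H2 g2] m2] ok2] [<- _ _ <-] [[[Ht Hin] Hchk] Hok2].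
have Hl1 : H (l - 1) = Some (enc (take (l - 1) V)) by rewrite HV ifT //; lia.
set V1 := if l <= size V then V else rcons V (o, j).
have HV1 : view (if H l is None then upd H l (Some hl) else H) V1.
  rewrite /V1; case: ifP => Hls.
    by rewrite HV Hls.
  have El : l = (size V).+1 by lia.
  rewrite HV Hls => x; rewrite /upd size_rcons.
  case: eqP => [->|Hx].
    rewrite El leqnn take_oversize ?size_rcons // enc_rcons /hl.
    by rewrite -El Hl1 El subn1 /= take_size.
  rewrite HV; case: (ltngtP x l) Hx => //.
  - move=> Hlt _.
    have h1 : x <= size V by rewrite El ltnS in Hlt.
    have h2 : x <= (size V).+1 by apply: leqW.
    by rewrite h1 h2 take_rcons_le.
  - move=> Hgt _.
    have h1 : x <= size V = false by apply/negbTE; rewrite -ltnNge; rewrite El in Hgt; apply: ltnW.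
    have h2 : x <= (size V).+1 = false by apply/negbTE; rewrite -ltnNge; rewrite El in Hgt.
    by rewrite h1 h2.
have Hsz1 : c + k.+1 <= (size V1).+1.
  by rewrite /V1; case: ifP => Hls; rewrite ?size_rcons; lia.
have HP1 : forall x, x \in V1 -> Pinv log x.
  rewrite /V1; case: ifP => _ x; first by move=> Hx; apply: HP.
  rewrite -cats1 mem_cat => /orP [/HP //|].
  by rewrite inE => /eqP ->.
have Hnext : c + k.+1 = (c + k).+1 by lia.
have [V' [HV' Htk [Hs1 Hs2] HP' Hon]] := IH k.+1 _ Z V1 _ _ _ _ HV1 Hsz1 (ltn0Sn _) HP1 E Hok2.
have HVV1 : take (size V) V1 = V.
  rewrite /V1; case: ifP => _; first by rewrite take_size.
  by rewrite take_rcons_le // take_size.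
have HsV1 : size V <= size V1 by rewrite /V1; case: ifP => _; rewrite ?size_rcons.
have HlV1 : l <= size V1 by rewrite /V1; case: ifP => Hls; rewrite ?size_rcons //; lia.
exists V'; split=> //.
- by rewrite -(take_takel V' HsV1) Htk.
- split; last by apply: leq_trans HsV1 Hs2.
  rewrite Hnext /= in Hs1; rewrite addnS -addSn prednK //; exact: ltn_addl.
- case=> [|mm] o' j' tau' /=.
  + case=> <- <- _; rewrite addn0.
    have -> : take l V' = take l V1 by rewrite -Htk take_takel.
    have -> : take l.-1 V' = take l.-1 V1 by rewrite -Htk take_takel //; lia.
    rewrite /V1; case: ifP => Hls.
    * have [x Ex] := take_last_ex (ltn_addl _ Hk) Hls.
      move: (HV l); rewrite Hls Ex => /Hchk.
      rewrite enc_rcons /hl Hl1 subn1 => HH.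
      have E1 : x.1 = o by case: HH.
      have E2 : x.2 = j by case: HH.
      by case: x Ex HH E1 E2 => a b /= _ _ -> ->.
    * have El : l = (size V).+1 by lia.
      rewrite El /= take_oversize ?size_rcons // take_rcons_le // take_size //.
  + move=> /Hon; by rewrite Hnext addSn addnS.
Qed.


Notation obsT := (obs n Op Rsp).
Notation wT := (world n Op St).

Lemma In_onth T (s : seq T) x : List.In x s <-> exists t, onth s t = Some x.
Proof.
elim: s => [|y s IH] /=; first by split=> // -[t]; rewrite onth0n.
split.
- case=> [->|/IH [t Ht]]; first by exists 0.
  by exists t.+1.
- case=> [[|t]] /=; first by case=> ->; left.
  by move=> Ht; right; apply/IH; exists t.
Qed.

Lemma onth_lt T (s : seq T) t x : onth s t = Some x -> t < size s.
Proof. by move=> H; rewrite -onthTE H. Qed.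

Lemma onth_catl T (s1 s2 : seq T) t : t < size s1 -> onth (s1 ++ s2) t = onth s1 t.
Proof. by move=> H; rewrite onth_cat H. Qed.

Lemma onth_some_cat T (s1 s2 : seq T) t x : onth s1 t = Some x -> onth (s1 ++ s2) t = Some x.
Proof. by move=> H; rewrite onth_catl // (onth_lt H). Qed.

Lemma onth_rcons T (s : seq T) x t :
  onth (rcons s x) t = if t < size s then onth s t else if t == size s then Some x else None.
Proof.
rewrite -cats1 onth_cat; case: ltnP => // H.
case: eqP => [->|Hne]; first by rewrite subnn.
by rewrite onth_default //= subn_gt0 ltn_neqAle H andbT; apply/eqP=> E; apply: Hne.
Qed.

Lemma onth_rcons_some T (s : seq T) x t y : onth (rcons s x) t = Some y ->
  onth s t = Some y \/ (t = size s /\ y = x).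
Proof.
rewrite onth_rcons; case: ltnP => _; first by left.
by case: eqP => // -> [->]; right.
Qed.

Lemma In_cat T (s1 s2 : seq T) x : List.In x (s1 ++ s2) <-> List.In x s1 \/ List.In x s2.
Proof.
elim: s1 => [|y s1 IH] /=; first by split=> [|[]//]; right.
by rewrite IH; tauto.
Qed.

Lemma In_rcons T (s : seq T) x y : List.In y (rcons s x) <-> List.In y s \/ y = x.
Proof. by rewrite -cats1 In_cat /=; intuition. Qed.

Lemma inv_in (tr : seq obsT) j x : List.In (OInv Rsp j x) tr -> x \in invoked_ops tr.
Proof.
elim: tr => [|e tr IH] //= [-> /=|/IH]; first by rewrite inE eqxx.
by case: e => //= *; rewrite inE; apply/orP; right.
Qed.

Lemma inv_uniq_idx (tr : seq obsT) a b j j' x :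
  uniq (invoked_ops tr) -> onth tr a = Some (OInv Rsp j x) -> onth tr b = Some (OInv Rsp j' x) -> a = b.
Proof.
elim: tr a b => [|e tr IH] a b /=; first by rewrite onth0n.
case: a => [|a]; case: b => [|b] //=.
- move=> Hu [Ea] Hb; subst e; move: Hu => /= /andP [Hx _]; exfalso.
  by move: Hx; rewrite (inv_in (proj2 (In_onth _ _) (ex_intro _ b Hb))).
- move=> Hu Ha [Eb]; subst e; move: Hu => /= /andP [Hx _]; exfalso.
  by move: Hx; rewrite (inv_in (proj2 (In_onth _ _) (ex_intro _ a Ha))).
- move=> Hu Ha Hb; congr S; apply: (IH a b) Ha Hb.
  by case: e Hu => //= ? ? /andP [].
Qed.

Lemma inv_uniq_in (tr : seq obsT) j j' x :
  uniq (invoked_ops tr) -> List.In (OInv Rsp j x) tr -> List.In (OInv Rsp j' x) tr -> j = j'.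
Proof.
move=> Hu /In_onth [a Ha] /In_onth [b Hb].
have E := inv_uniq_idx Hu Ha Hb; subst b.
by rewrite Ha in Hb; case: Hb.
Qed.

Lemma inv_fresh (tr : seq obsT) i j x :
  uniq (invoked_ops (tr ++ [:: OInv Rsp i x])) -> ~ List.In (OInv Rsp j x) tr.
Proof.
rewrite /invoked_ops pmap_cat cat_uniq /= => /and3P [_ Hh _] /inv_in Hin.
by move: Hh; rewrite /invoked_ops in Hin; rewrite orbF Hin.
Qed.


Definition mkey (e : sv) (e' : obsT) : Prop :=
  match e with
  | (j, PInv x j0) => j0 = j /\ e' = OInv Rsp j x
  | (j, PCom o l _ _) => e' = OCommit Rsp j o l
  end.

Definition confirmsq (tr : seq obsT) (k : cl) : seq (Op * nat) :=
  pmap (fun e => if e is OConfirm k' o q _ then (if k' == k then Some (o, q) else None)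
                 else None) tr.

Record Inv (w : wT) (tr : seq obsT) : Prop := {
  iphi : exists phi : nat -> nat,
    (forall t e, onth (wlog w) t = Some e -> exists e', onth tr (phi t) = Some e' /\ mkey e e') /\
    (forall t1 t2, t1 < t2 -> t2 < size (wlog w) -> phi t1 < phi t2);
  icuniq : forall a b j1 j2 x l1 l2, onth tr a = Some (OCommit Rsp j1 x l1) ->
    onth tr b = Some (OCommit Rsp j2 x l2) -> a = b;
  icnotpend : forall j x l i, List.In (OCommit Rsp j x l) tr -> cu (wcl w i) <> Some x;
  ipendinv : forall i x, cu (wcl w i) = Some x -> List.In (OInv Rsp i x) tr;
  icominv : forall j x l, List.In (OCommit Rsp j x l) tr -> List.In (OInv Rsp j x) tr;
  ires : forall a i o r, onth tr a = Some (ORes i o r) ->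
    exists l, 0 < a /\ onth tr a.-1 = Some (OCommit Rsp i o l);
  iview : forall i, exists V, [/\ cc (wcl w i) <= size V, view (cH (wcl w i)) V,
    (forall x, x \in V -> Pinv (wlog w) x) &
    (forall t a la h z, onth (wlog w) t = Some (i, PCom a la h z) ->
        la <= size V /\ h = Some (enc (take la V)))];
  icom : forall t j o l h z, onth (wlog w) t = Some (j, PCom o l h z) ->
    exists L, [/\ 0 < l, size L = l.-1, h = Some (enc (rcons L (o, j))) &
      forall x, x \in rcons L (o, j) -> exists t', t' < t /\ onth (wlog w) t' = Some (x.2, PInv x.1 x.2)];
  imono : forall t1 t2 i a b la lb h1 z1 h2 z2, t1 < t2 ->
    onth (wlog w) t1 = Some (i, PCom a la h1 z1) ->
    onth (wlog w) t2 = Some (i, PCom b lb h2 z2) -> la < lb;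
  ipend : forall i b, chalt (wcl w i) = false -> cu (wcl w i) = Some b ->
    exists t, onth (wlog w) t = Some (i, PInv b i) /\
      forall t2 a la h z, onth (wlog w) t2 = Some (i, PCom a la h z) -> t2 < t;
  iconf : forall k x q j, List.In (OConfirm Rsp k x q j) tr ->
    exists h z, List.In (j, PCom x q h z) (wlog w) /\ cH (wcl w k) q = h;
  iconfq : forall k, map snd (confirmsq tr k) = iota 1 (cc (wcl w k));
  icomlog : forall j o l, List.In (OCommit Rsp j o l) tr ->
    exists h z, List.In (j, PCom o l h z) (wlog w)
}.

Ltac kill0 := match goal with H : onth [::] _ = _ |- _ => rewrite onth0n in H; discriminate H end.

Lemma Inv_init : Inv (winit n Op s0) [::].
Proof.
split; rewrite /winit /=; try by move=> *; kill0.
all: try by move=> *; match goal with H : List.In _ [::] |- _ => case: H end.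
all: try by intros; (discriminate || contradiction).
- exists id; split; first by move=> t e; rewrite onth0n.
  by [].
- move=> i; exists [::]; split=> //=; last by move=> *; kill0.
  by move=> l; rewrite /cinit /= leqn0; case: eqP => // ->.
- by [].
Qed.

Lemma Inv_frame w w' tr : Inv w tr -> wlog w' = wlog w ->
  (forall k, [/\ cu (wcl w' k) = cu (wcl w k), cc (wcl w' k) = cc (wcl w k),
     cH (wcl w' k) = cH (wcl w k) & (chalt (wcl w' k) = false -> chalt (wcl w k) = false)]) ->
  Inv w' (tr ++ [::]).
Proof.
rewrite cats0 => I El Hk; split; rewrite ?El.
- exact: iphi I.
- exact: icuniq I.
- by move=> j x l i; case: (Hk i) => -> _ _ _; exact: (icnotpend I).
- by move=> i x; case: (Hk i) => -> _ _ _; exact: (ipendinv I).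
- exact: icominv I.
- exact: ires I.
- by move=> i; case: (Hk i) => _ -> -> _; exact: (iview I).
- exact: icom I.
- exact: imono I.
- by move=> i b; case: (Hk i) => -> _ _ Hh /Hh; exact: (ipend I).
- by move=> k x q j; case: (Hk k) => _ _ -> _; exact: (iconf I).
- by move=> k; case: (Hk k) => _ -> _ _; exact: (iconfq I).
- exact: icomlog I.
Qed.


Definition PhiOK (log : seq sv) (tr : seq obsT) :=
  exists phi : nat -> nat,
    (forall t e, onth log t = Some e -> exists e', onth tr (phi t) = Some e' /\ mkey e e') /\
    (forall t1 t2, t1 < t2 -> t2 < size log -> phi t1 < phi t2).

Lemma onth_cat_inv T (s1 s2 : seq T) t x : onth (s1 ++ s2) t = Some x ->
  onth s1 t = Some x \/ (size s1 <= t /\ onth s2 (t - size s1) = Some x).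
Proof. by rewrite onth_cat; case: ltnP => H E; [left | right]. Qed.

Lemma phi_same log tr ev : PhiOK log tr -> PhiOK log (tr ++ ev).
Proof.
case=> phi [H1 H2]; exists phi; split=> // t e /H1 [e' [He' Hk]].
by exists e'; rewrite (onth_some_cat _ He').
Qed.

Lemma phi_ext log tr ev x e' : PhiOK log tr -> onth ev 0 = Some e' -> mkey x e' ->
  PhiOK (rcons log x) (tr ++ ev).
Proof.
case=> phi [H1 H2] Hev Hk.
exists (fun t => if t < size log then phi t else size tr); split.
- move=> t e He; case: (onth_rcons_some He) => [Ht|[Et Ee]]; last subst t e.
  + rewrite (onth_lt Ht); have [e1 [He1 Hk1]] := H1 _ _ Ht.
    by exists e1; rewrite (onth_some_cat _ He1).
  + by rewrite ltnn; exists e'; rewrite onth_cat ltnn subnn.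
- move=> t1 t2 Hlt; rewrite size_rcons ltnS => Hle.
  have Ht1 : t1 < size log by apply: leq_trans Hlt Hle.
  rewrite Ht1; case: (ltnP t2 (size log)) => Ht2; first exact: H2 Hlt Ht2.
  case E: (onth log t1) => [e|]; last by move: Ht1; rewrite -onthTE E.
  by have [e1 [He1 _]] := H1 _ _ E; exact: onth_lt He1.
Qed.

Lemma In_catl T (s1 s2 : seq T) x : List.In x s1 -> List.In x (s1 ++ s2).
Proof. by move=> H; apply/In_cat; left. Qed.

Lemma In_rconsl T (s : seq T) x y : List.In y s -> List.In y (rcons s x).
Proof. by move=> H; apply/In_rcons; left. Qed.

Lemma onth_rconsl T (s : seq T) x t y : onth s t = Some y -> onth (rcons s x) t = Some y.
Proof. by rewrite -cats1; apply: onth_some_cat. Qed.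

Lemma In_single_cat (tr : seq obsT) ev y :
  List.In y (tr ++ ev) -> List.In y tr \/ List.In y ev.
Proof. by move/In_cat. Qed.

Lemma confirmsq_cat tr ev k : confirmsq (tr ++ ev) k = confirmsq tr k ++ confirmsq ev k.
Proof. by rewrite /confirmsq pmap_cat. Qed.


Lemma onth_ev1 (tr : seq obsT) e a y : onth (tr ++ [:: e]) a = Some y ->
  onth tr a = Some y \/ (a = size tr /\ y = e).
Proof. by rewrite cats1; apply: onth_rcons_some. Qed.

Lemma In_ev1 (tr : seq obsT) e y : List.In y (tr ++ [:: e]) -> List.In y tr \/ y = e.
Proof. by rewrite cats1 => /In_rcons. Qed.

Lemma Inv_invoke w tr i o :
  Inv w tr -> uniq (invoked_ops (tr ++ [:: OInv Rsp i o])) -> cu (wcl w i) = None ->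
  Inv (setcl w i (CState (Some o) (cc (wcl w i)) (cH (wcl w i)) (cZ (wcl w i)) (cs (wcl w i)) (chalt (wcl w i)))
          (if chalt (wcl w i) then wlog w else rcons (wlog w) (i, PInv o i)))
      (tr ++ [:: OInv Rsp i o]).
Proof.
move=> I Hu Hcu.
have Hfresh := inv_fresh Hu.
set log' := (if _ then _ else _).
have Hlog : forall t e, onth (wlog w) t = Some e -> onth log' t = Some e.
  by move=> t e He; rewrite /log'; case: ifP => _ //; apply: onth_rconsl.
have Hlog' : forall t j a l h z, onth log' t = Some (j, PCom a l h z) -> onth (wlog w) t = Some (j, PCom a l h z).
  move=> t j a l h z; rewrite /log'; case: ifP => _ // Ht.
  by case: (onth_rcons_some Ht) => [//|[_ E]].
have Hin : forall e, List.In e (wlog w) -> List.In e log'.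
  by move=> e He; rewrite /log'; case: ifP => _ //; apply: In_rconsl.
have Hnocom : forall j x l, List.In (OCommit Rsp j x l) (tr ++ [:: OInv Rsp i o]) ->
    List.In (OCommit Rsp j x l) tr.
  by move=> j x l Hc; case: (In_ev1 Hc).
split; rewrite /setcl /=.
- rewrite /log'; case: ifP => _; first exact: phi_same (iphi I).
  by apply: phi_ext (iphi I) _ _; [rewrite /= | split].
- move=> a b j1 j2 x l1 l2 Ha Hb.
  case: (onth_ev1 Ha) => [Ha'|[_ E]]; last discriminate.
  case: (onth_ev1 Hb) => [Hb'|[_ E]]; last discriminate.
  exact: (icuniq I Ha' Hb').
- move=> j x l k /Hnocom Hc; case: eqP => [Ek|_]; last exact: (icnotpend I Hc).
  move=> [Ex]; subst x; exact: Hfresh (icominv I Hc).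
- move=> k x; case: eqP => [Ek|_] Hk.
  + by subst k; case: Hk => <-; apply/In_cat; right; left.
  + by apply: In_catl; exact: (ipendinv I Hk).
- by move=> j x l /Hnocom Hc; apply: In_catl; exact: (icominv I Hc).
- move=> a k o' r Ha; case: (onth_ev1 Ha) => [/(ires I) [l [H1 H2]]|[_ //]].
  by exists l; rewrite (onth_some_cat _ H2).
- move=> k; case: (iview I k) => V [H1 H2 H3 H4]; exists V; split.
  + by case: eqP => [Ek|]; [subst k|].
  + by case: eqP => [Ek|]; [subst k|].
  + by move=> x /H3; apply: Hin.
  + by move=> t a la h z /Hlog' /H4.
- move=> t j a l h z /Hlog' /(icom I) [L [H1 H2 H3 H4]]; exists L; split=> // x /H4 [t' [Ht' He]].
  by exists t'; split=> //; apply: Hlog.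
- by move=> t1 t2 k a b la lb h1 z1 h2 z2 Hlt /Hlog' H1 /Hlog' H2; exact: (imono I Hlt H1 H2).
- move=> k b; case: eqP => [->|Hne].
  + move=> Hh [<-]; exists (size (wlog w)); rewrite /log' Hh; split.
      by rewrite onth_rcons ltnn eqxx.
    move=> t2 a la h z Ht2; case: (onth_rcons_some Ht2) => [H0|[_ E]]; [exact: onth_lt H0 | discriminate].
  + move=> Hh Hb; case: (ipend I Hh Hb) => t [Ht Hall]; exists t; split; first exact: Hlog.
    by move=> t2 a la h z /Hlog'; apply: Hall.
- move=> k x q j Hc0; case: (In_ev1 Hc0) => [Hc|//]; case: (iconf I Hc) => h [z [H1 H2]].
  by exists h, z; split; [apply: Hin | case: eqP => [Ek|]; [subst k|]].
- move=> k; rewrite confirmsq_cat /= cats0 (iconfq I k).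
  by case: eqP => [Ek|]; [subst k|].
- by move=> j x l /Hnocom /(icomlog I) [h [z Hc]]; exists h, z; apply: Hin.
Qed.


Lemma onth_ev2 (tr : seq obsT) e1 e2 a y : onth (tr ++ [:: e1; e2]) a = Some y ->
  onth tr a = Some y \/ (a = size tr /\ y = e1) \/ (a = (size tr).+1 /\ y = e2).
Proof.
move=> H0; case: (onth_cat_inv H0) => [H|[Hle H]]; first by left.
right; move: H; case E: (a - size tr) => [|[|k]] /=.
- by case=> <-; left; split=> //; apply/eqP; rewrite eqn_leq Hle -subn_eq0 E.
- by case=> <-; right; split=> //; lia.
- by rewrite onth0n.
Qed.

Lemma In_ev2 (tr : seq obsT) e1 e2 y : List.In y (tr ++ [:: e1; e2]) ->
  List.In y tr \/ y = e1 \/ y = e2.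
Proof. by move=> H0; case: (proj1 (In_cat _ _ _) H0) => [H|[->|[->|[]]]]; tauto. Qed.

Lemma view_mono H V H' V' q y : view H V -> view H' V' -> take (size V) V' = V ->
  H q = Some y -> H' q = Some y.
Proof.
move=> HV HV' Ht; rewrite HV HV'; case: ifP => // Hq.
have Hs : size V <= size V' by rewrite -Ht size_take_min geq_minr.
by rewrite (leq_trans Hq Hs) -Ht take_takel.
Qed.

Lemma view_sub (V V' : seq (Op * cl)) q : take (size V) V' = V -> q <= size V -> take q V' = take q V.
Proof. by move=> Ht Hq; rewrite -Ht take_takel. Qed.

Lemma pinv_unique log (tr : seq obsT) t1 t2 j j' x :
  PhiOK log tr -> uniq (invoked_ops tr) ->
  onth log t1 = Some (j, PInv x j) -> onth log t2 = Some (j', PInv x j') -> t1 = t2.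
Proof.
case=> phi [H1 H2] Hu E1 E2.
have [e1 [F1 [_ K1]]] := H1 _ _ E1; have [e2 [F2 [_ K2]]] := H1 _ _ E2.
subst e1 e2; have Eq := inv_uniq_idx Hu F1 F2.
case: (ltngtP t1 t2) => // Hlt; exfalso.
- by have := H2 _ _ Hlt (onth_lt E2); rewrite Eq ltnn.
- by have := H2 _ _ Hlt (onth_lt E1); rewrite Eq ltnn.
Qed.


Lemma Inv_reply w tr i om u tau z r H' g m ok l :
  Inv w tr -> uniq (invoked_ops tr) -> chalt (wcl w i) = false ->
  scan i (wlog w) (cc (wcl w i)) 1 (cH (wcl w i)) (cZ (wcl w i)) (rcons om (u, i, tau)) = (H', g, m, ok) ->
  ok -> cu (wcl w i) = Some u ->
  l = cc (wcl w i) + size (rcons om (u, i, tau)) ->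
  Inv (setcl w i (CState None (cc (wcl w i)) H' (upd (cZ (wcl w i)) l (Some z)) (cs (wcl w i)) false)
         (rcons (wlog w) (i, PCom u l (H' l) z)))
      (tr ++ [:: OCommit Rsp i u l; ORes i u r]).
Proof.
move=> I Hu Hh Hscan Hok Hcu El.
set c := cc (wcl w i).
have [V [HV1 HV2 HV3 HV4]] := iview I i.
have Hck : c + 1 <= (size V).+1 by rewrite addn1 ltnS.
have [V' [HV'1 HV'2 [HV'3 HV'4] HV'5 HV'6]] :=
  scanP HV2 Hck (ltn0Sn 0) HV3 Hscan Hok.
rewrite addn1 /= size_rcons in HV'3.
have Hlast : take l V' = rcons (take l.-1 V') (u, i).
  have := HV'6 (size om) u i tau; rewrite -cats1 onth_cat ltnn subnn /= => /(_ erefl).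
  suff -> : l = c + 1 + size om by [].
  by rewrite El size_rcons addnS addn1 addSn.
have HlV' : l <= size V' by rewrite El size_rcons.
have Hl0 : 0 < l by rewrite El size_rcons addnS.
have HH'l : H' l = Some (enc (take l V')) by rewrite HV'1 HlV'.
set log := wlog w.
set x := (i, PCom u l (H' l) z).
have Hlog : forall t e, onth log t = Some e -> onth (rcons log x) t = Some e.
  by move=> t e; apply: onth_rconsl.
have Hin : forall e, List.In e log -> List.In e (rcons log x).
  by move=> e; apply: In_rconsl.
have HPi : PhiOK log tr := iphi I.
split; rewrite /setcl /=.
- by apply: phi_ext (iphi I) _ _.
- move=> a b j1 j2 y l1 l2 Ha Hb.
  case: (onth_ev2 Ha) => [Ha'|[[Ea [Ey1 Ey2 Ey3]]|[_ E]]]; last discriminate;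
  case: (onth_ev2 Hb) => [Hb'|[[Eb [Ez1 Ez2 Ez3]]|[_ E]]]; try discriminate.
  + exact: (icuniq I Ha' Hb').
  + subst; exfalso; apply: (icnotpend I _ Hcu); apply/In_onth; exists a; exact: Ha'.
  + subst; exfalso; apply: (icnotpend I _ Hcu); apply/In_onth; exists b; exact: Hb'.
  + by subst.
- move=> j y l' k Hc; case: eqP => [Ek|Hne]; first by [].
  case: (In_ev2 Hc) => [Hc'|[[_ -> _]|//]]; first exact: (icnotpend I Hc').
  move=> Hk; apply: Hne; apply: (inv_uniq_in Hu (ipendinv I Hk) (ipendinv I Hcu)).
- move=> k y; case: eqP => [Ek|_] // Hk.
  by apply: In_catl; exact: (ipendinv I Hk).
- move=> j y l' Hc; apply: In_catl; case: (In_ev2 Hc) => [Hc'|[[-> -> _]|//]].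
  + exact: (icominv I Hc').
  + exact: (ipendinv I Hcu).
- move=> a k o' r' Ha; case: (onth_ev2 Ha) => [Ha'|[[_ //]|[Ea [-> -> _]]]].
  + case: (ires I Ha') => l' [H1 H2]; exists l'; split=> //.
    exact: onth_some_cat H2.
  + exists l; subst a; split=> //=.
    by rewrite onth_cat ltnn subnn.
- move=> k; case: eqP => [Ek|Hne].
  + subst k; exists V'; split=> //.
    * by apply: leq_trans HV1 HV'4.
    * by move=> y /HV'5; apply: Hin.
    * move=> t a la h z' Ht; case: (onth_rcons_some Ht) => [Ht'|[_ [Ea Ela Eh _]]].
        have [H1 H2] := HV4 _ _ _ _ _ Ht'; split; first exact: leq_trans H1 HV'4.
        by rewrite H2 (view_sub HV'2 H1).
      by subst; split.
  + case: (iview I k) => W [H1 H2 H3 H4]; exists W; split=> //.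
    * by move=> y /H3; apply: Hin.
    * move=> t a la h z' Ht; case: (onth_rcons_some Ht) => [Ht'|[_ [Ek _]]]; first exact: H4 Ht'.
      by exfalso; apply: Hne.
- move=> t j a la h z' Ht; case: (onth_rcons_some Ht) => [Ht'|[Et [Ej Ea Ela Eh _]]].
  + have [L [H1 H2 H3 H4]] := icom I Ht'; exists L; split=> // y /H4 [t' [Ht'' Hy]].
    by exists t'; split=> //; apply: Hlog.
  + subst j a la h; exists (take l.-1 V'); split=> //.
    * by rewrite size_takel //; apply: leq_trans (leq_pred _) HlV'.
    * by rewrite -Hlast.
    * move=> y; rewrite -Hlast => /mem_take /HV'5 /In_onth [t' Ht'].
      by exists t'; split; [rewrite Et; exact: onth_lt Ht' | apply: Hlog].
- move=> t1 t2 k a b la lb h1 z1 h2 z2 Hlt Ht1 Ht2.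
  have Ht1' : onth log t1 = Some (k, PCom a la h1 z1).
    case: (onth_rcons_some Ht1) => [//|[Et _]].
    by exfalso; move: (onth_lt Ht2) Hlt; rewrite size_rcons Et; lia.
  case: (onth_rcons_some Ht2) => [Ht2'|[Et [Ek Eb Elb _ _]]]; first exact: (imono I Hlt Ht1' Ht2').
  subst k b lb; rewrite ltnNge; apply/negP => Hle.
  have [Hla Hh1] := HV4 _ _ _ _ _ Ht1'.
  have [L [_ _ HL1 HL2]] := icom I Ht1'.
  have EL : rcons L (a, i) = take la V by apply: enc_inj; rewrite HL1 in Hh1; case: Hh1.
  have Hmem : (u, i) \in rcons L (a, i).
    have H1 : (u, i) \in take l V.
      by rewrite -(view_sub HV'2 (leq_trans Hle Hla)) Hlast mem_rcons mem_head.
    by move: H1; rewrite EL -(take_takel V Hle); apply: mem_take.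
  have [t' [Ht'1 Ht'2]] := HL2 _ Hmem.
  have [tu [Htu1 Htu2]] := ipend I Hh Hcu.
  have Ht1u := Htu2 _ _ _ _ _ Ht1'.
  have := pinv_unique HPi Hu Ht'2 Htu1; move=> Eq; subst tu.
  by move: (ltn_trans Ht'1 Ht1u); rewrite ltnn.
- move=> k b; case: eqP => [Ek|Hne] // Hh' Hb.
  have [t [Ht Hall]] := ipend I Hh' Hb; exists t; split; first exact: Hlog.
  move=> t2 a la h z' Ht2; case: (onth_rcons_some Ht2) => [Ht2'|[_ [Ek _]]]; first exact: Hall Ht2'.
  by exfalso; apply: Hne.
- move=> k y q j Hc; case: (In_ev2 Hc) => [Hc'|[//|//]].
  have [h [z' [H1 H2]]] := iconf I Hc'; exists h, z'; split; first exact: Hin.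
  case: eqP => [Ek|//]; subst k.
  have [t Ht] := proj1 (In_onth _ _) H1.
  have [L [_ _ HL _]] := icom I Ht; rewrite HL in H2.
  by rewrite /= (view_mono HV2 HV'1 HV'2 H2) HL.
- move=> k; rewrite confirmsq_cat /= cats0 (iconfq I k).
  by case: eqP => [Ek|]; [subst k|].
- move=> j y l' Hc; case: (In_ev2 Hc) => [Hc'|[[-> -> ->]|//]].
  + by have [h [z' H1]] := icomlog I Hc'; exists h, z'; apply: Hin.
  + by exists (H' l), z; apply/In_rcons; right.
Qed.


Lemma Inv_bcast w tr i o q h z phi j H1 s' :
  Inv w tr -> chalt (wcl w i) = false -> q = cc (wcl w i) + 1 ->
  verify (wlog w) j phi (PCom o q h z) ->
  H1 = (if cH (wcl w i) q is None
        then upd (cH (wcl w i)) q (Some (Hash (cH (wcl w i) (q - 1)) o q j))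
        else cH (wcl w i)) ->
  h = H1 q ->
  Inv (setcl w i (CState (cu (wcl w i)) q H1 (cZ (wcl w i)) s' false) (wlog w))
      (tr ++ [:: OConfirm Rsp i o q j]).
Proof.
move=> I Hh Eq [_ Hv] EH1 Eh.
have [t Ht] := proj1 (In_onth _ _) Hv.
have [L [Hq0 HL1 HL2 HL3]] := icom I Ht.
have Hoj : Pinv (wlog w) (o, j).
  have Hm : (o, j) \in rcons L (o, j) by rewrite mem_rcons mem_head.
  have [t' [_ Ht']] := HL3 _ Hm.
  by apply/In_onth; exists t'.
have [V [HV1 HV2 HV3 HV4]] := iview I i.
set V' := if cH (wcl w i) q is None then rcons V (o, j) else V.
have HVV : take (size V) V' = V.
  by rewrite /V'; case: (cH _ q) => [_|]; rewrite ?take_rcons_le // take_size.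
have HsV : size V <= size V' by rewrite /V'; case: (cH _ q) => [_|]; rewrite ?size_rcons.
have HV' : view H1 V' /\ q <= size V'.
  rewrite EH1 /V'; move: (HV2 q); case E: (cH _ q) => [y|].
    by case: ifP => // Hq _; split.
  case: ifP => // Hq _.
  have Es : size V = cc (wcl w i).
    by apply/eqP; rewrite eqn_leq HV1 andbT; move: Hq; rewrite Eq; lia.
  split; last by rewrite size_rcons Eq Es addn1.
  move=> x; rewrite /upd size_rcons; case: eqP => [->|Hx].
  - rewrite Eq -Es addn1 leqnn take_oversize ?size_rcons // enc_rcons.
    by rewrite HV2 subn1 /= leqnn take_size.
  - rewrite HV2; case: (ltngtP x q) Hx => // Hlt _.
    + have h1 : x <= size V by move: Hlt; rewrite Eq -Es; lia.
      by rewrite h1 (leq_trans h1 (leqnSn _)) take_rcons_le.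
    + have h1 : x <= size V = false by apply/negbTE; move: Hlt; rewrite Eq -Es; lia.
      have h2 : x <= (size V).+1 = false by apply/negbTE; move: Hlt; rewrite Eq -Es; lia.
      by rewrite h1 h2.
case: HV' => HV'1 HqV'.
have HP' : forall x, x \in V' -> Pinv (wlog w) x.
  rewrite /V'; case: (cH _ q) => [_|]; first exact: HV3.
  by move=> x; rewrite mem_rcons inE => /orP [/eqP ->|/HV3].
split; rewrite /setcl /=.
- exact: phi_same (iphi I).
- move=> a b j1 j2 x l1 l2 Ha Hb.
  case: (onth_ev1 Ha) => [Ha'|[_ E]]; last discriminate.
  case: (onth_ev1 Hb) => [Hb'|[_ E]]; last discriminate.
  exact: (icuniq I Ha' Hb').
- move=> j' x l k Hc; case: (In_ev1 Hc) => [Hc'|//].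
  by case: eqP => [Ek|_]; [subst k|]; exact: (icnotpend I Hc').
- move=> k x; case: eqP => [Ek|_]; [subst k|] => Hk; apply: In_catl; exact: (ipendinv I Hk).
- move=> j' x l Hc; case: (In_ev1 Hc) => [Hc'|//]; apply: In_catl; exact: (icominv I Hc').
- move=> a k o' r' Ha; case: (onth_ev1 Ha) => [Ha'|[_ //]].
  by case: (ires I Ha') => l' [H3 H4]; exists l'; split=> //; exact: onth_some_cat H4.
- move=> k; case: eqP => [Ek|Hne].
  + subst k; exists V'; split=> //.
    move=> t0 a la h' z' Ht0; have [H3 H4] := HV4 _ _ _ _ _ Ht0.
    by split; [exact: leq_trans H3 HsV | rewrite H4 (view_sub HVV H3)].
  + exact: (iview I k).
- exact: (icom I).
- exact: (imono I).
- move=> k b; case: eqP => [Ek|_]; [subst k|] => Hh' Hb; exact: (ipend I _ Hb).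
- move=> k x q' j' Hc; case: (In_ev1 Hc) => [Hc'|[Ek Ex Eq' Ej]].
  + have [h' [z' [H3 H4]]] := iconf I Hc'; exists h', z'; split=> //.
    case: eqP => [Ek|//]; subst k => /=.
    have [t' Ht'] := proj1 (In_onth _ _) H3.
    have [L' [_ _ HL' _]] := icom I Ht'; rewrite HL' in H4.
    by rewrite (view_mono HV2 HV'1 HVV H4) HL'.
  + subst k x q' j'; exists h, z; split=> //.
    by rewrite eqxx /= Eh.
- move=> k; rewrite confirmsq_cat /=; case: eqP => [Ek|Hne].
  + subst k; rewrite eqxx map_cat (iconfq I i) /= Eq.
    by rewrite iotaD /= add1n addn1.
  + case: eqP => [Ek|_]; first by exfalso; apply: Hne.
    by rewrite cats0 (iconfq I k).
- move=> j' x l Hc; case: (In_ev1 Hc) => [Hc'|//]; exact: (icomlog I Hc').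
Qed.


Lemma uniq_prefix (tr ev : seq obsT) : uniq (invoked_ops (tr ++ ev)) -> uniq (invoked_ops tr).
Proof. by rewrite /invoked_ops pmap_cat cat_uniq => /andP []. Qed.

Lemma Inv_reach wf trf : reachable F s0 wf trf -> uniq (invoked_ops trf) -> Inv wf trf.
Proof.
elim=> [|w0 tr0 w1 ev Hr IH Hs] Hu; first exact: Inv_init.
have I := IH (uniq_prefix Hu).
case: Hs Hu I => {w1 ev}.
- move=> w i o Hcu /= Hu I; exact: Inv_invoke.
- move=> w i om u tau z r H' g m ok /= Hh Hscan Hok Hcu _ Hu I.
  exact: (@Inv_reply w tr0 i om u tau z r H' g m ok _ I (uniq_prefix Hu) Hh Hscan Hok Hcu erefl).
- move=> w i om H' g m ok /= Hh _ _ _ I; apply: Inv_frame I _ _ => // k.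
  by rewrite /setcl /=; case: eqP => [->|].
- move=> w i o q h z phi j /= Hh Eq Hv Eh _ I.
  exact: (Inv_bcast _ I Hh Eq Hv erefl Eh).
- move=> w i o q h z phi j /= Hh _ _ I; apply: Inv_frame I _ _ => // k.
  by rewrite /setcl /=; case: eqP => [->|].
Qed.


Lemma index_take_in (T : eqType) (x : T) m s : x \in take m s -> index x (take m s) = index x s.
Proof. by move=> H; rewrite -{2}(cat_take_drop m s) index_cat H. Qed.

Lemma confirms_q (tr : seq obsT) k : confirms tr k = map fst (confirmsq tr k).
Proof.
elim: tr => [|e tr IH] //=; rewrite /confirms /confirmsq /= in IH *.
by case: e => //= k' o q j; case: eqP => _ //=; rewrite IH.
Qed.

Lemma confq_in (tr : seq obsT) k x q : (x, q) \in confirmsq tr k ->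
  exists j, List.In (OConfirm Rsp k x q j) tr.
Proof.
elim: tr => [|e tr IH] //=; rewrite /confirmsq /= in IH *.
case: e => [? ?|? ? ?|? ? ?|k' o q' j] /=; try by move=> Hm; have [j Hj] := IH Hm; exists j; right.
 case: eqP => [->|_] /=; last by move/IH => [j' Hj]; exists j'; right.
rewrite inE => /orP [/eqP [-> ->]|/IH [j' Hj]]; first by exists j; left.
by exists j'; right.
Qed.

Lemma commits_in (tr : seq obsT) i x l : (x, l) \in commits_of tr i ->
  List.In (OCommit Rsp i x l) tr.
Proof.
elim: tr => [|e tr IH] //=; rewrite /commits_of /= in IH *.
case: e => [? ?|? ? ?|i' o l'|? ? ? ?] /=; try by move=> Hm; right; apply: IH.
 case: eqP => [->|_] /=; last by move/IH; right.
by rewrite inE => /orP [/eqP [-> ->]|/IH]; [left|right].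
Qed.

Lemma onth_mid (s1 s2 : seq obsT) x : onth (s1 ++ x :: s2) (size s1) = Some x.
Proof. by rewrite onth_cat ltnn subnn. Qed.

Lemma temporal w tr o o' t t' j j' l h z :
  Inv w tr -> uniq (invoked_ops tr) -> completes_before tr o o' ->
  onth (wlog w) t' = Some (j', PInv o' j') -> onth (wlog w) t = Some (j, PCom o l h z) ->
  t' < t -> False.
Proof.
move=> I Hu [tr1 [tr2 [tr3 [i0 [j0 [r Etr]]]]]] E1 E2 Hlt.
have [phi [H1 H2]] := iphi I.
have [e1 [F1 [_ K1]]] := H1 _ _ E1; have [e2 [F2 K2]] := H1 _ _ E2; simpl in K2; subst e1 e2.
have Hmono := H2 _ _ Hlt (onth_lt E2).
have Ares : onth tr (size tr1) = Some (ORes i0 o r) by rewrite Etr onth_mid.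
have Binv : onth tr (size tr1 + (size tr2).+1) = Some (OInv Rsp j0 o').
  by rewrite Etr onth_cat ltnNge leq_addr /= addKn /= onth_mid.
have Eb := inv_uniq_idx Hu F1 Binv.
have [l0 [Hpos Hc]] := ires I Ares.
have Ea := icuniq I F2 Hc.
by move: Hmono; rewrite Eb Ea; lia.
Qed.


Lemma conf_pos w tr k V x q j : Inv w tr -> view (cH (wcl w k)) V ->
  List.In (OConfirm Rsp k x q j) tr ->
  exists t h z, [/\ onth (wlog w) t = Some (j, PCom x q h z),
     take q V = rcons (take q.-1 V) (x, j), q <= size V &
     forall y, y \in take q V -> exists t', t' < t /\ onth (wlog w) t' = Some (y.2, PInv y.1 y.2)].
Proof.
move=> I HV Hc.
have [h [z [Hin Hh]]] := iconf I Hc.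
have [t Ht] := proj1 (In_onth _ _) Hin.
have [L [Hq HL1 HL2 HL3]] := icom I Ht.
move: Hh; rewrite HV HL2; case: ifP => // Hqs [] /enc_inj EL.
exists t, h, z; split=> //.
- rewrite EL; congr rcons.
  by rewrite -(take_takel V (leq_pred q)) EL -cats1 take_size_cat.
- by rewrite EL.
Qed.

Lemma conf_nth w tr k x0 a : Inv w tr -> a < size (confirms tr k) ->
  exists j, List.In (OConfirm Rsp k (nth x0 (confirms tr k) a) a.+1 j) tr.
Proof.
move=> I; rewrite confirms_q size_map => Ha.
set CQ := confirmsq tr k.
have E2 : (nth (x0, 0) CQ a).2 = a.+1.
  rewrite -(nth_map (x0, 0) 0 snd Ha) (iconfq I k) nth_iota ?add1n //.
  by rewrite -(size_iota 1 (cc (wcl w k))) -(iconfq I k) size_map.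
have Hm : nth (x0, 0) CQ a \in CQ by apply: mem_nth.
have Hm' : ((nth (x0, 0) CQ a).1, (nth (x0, 0) CQ a).2) \in CQ by rewrite -surjective_pairing.
have [j Hj] := confq_in Hm'.
by exists j; rewrite (nth_map (x0, 0)) // -E2.
Qed.

Lemma conf_in (tr : seq obsT) k x q j : List.In (OConfirm Rsp k x q j) tr -> x \in confirms tr k.
Proof.
elim: tr => [|e tr IH] //= [->|/IH]; rewrite /confirms /=.
  by rewrite eqxx inE eqxx.
by case: e => //= k' *; case: eqP => _ //=; rewrite inE; apply/orP; right.
Qed.

Definition has_com (w : wT) x := exists t j l h z, onth (wlog w) t = Some (j, PCom x l h z).

Lemma neq_cb w tr o o' : Inv w tr -> uniq (invoked_ops tr) -> completes_before tr o o' ->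
  has_com w o -> o <> o'.
Proof.
move=> I Hu Hcb [t [j [l [h [z Ht]]]]] E; subst o'.
have [L [_ _ _ HL]] := icom I Ht.
have Hm : (o, j) \in rcons L (o, j) by rewrite mem_rcons mem_head.
have [t' [Hlt Ht']] := HL _ Hm.
exact: temporal I Hu Hcb Ht' Ht Hlt.
Qed.

Lemma com_of_conf w tr k x : Inv w tr -> x \in confirms tr k -> has_com w x.
Proof.
move=> I Hx; have Hlt : index x (confirms tr k) < size (confirms tr k) by rewrite index_mem.
have [j Hc] := conf_nth x I Hlt; rewrite nth_index // in Hc.
have [h [z [Hin _]]] := iconf I Hc; have [t Ht] := proj1 (In_onth _ _) Hin.
by exists t, j, (index x (confirms tr k)).+1, h, z.
Qed.

Lemma beta_in (tr : seq obsT) i P x : x \in commits_sorted tr i P ->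
  exists l, P l /\ List.In (OCommit Rsp i x l) tr.
Proof.
rewrite /commits_sorted => /mapP [[y l] Hy ->] /=.
move: Hy; rewrite mem_sort mem_filter => /andP [HP Hc].
by exists l; split=> //; apply: commits_in.
Qed.

Lemma com_of_beta w tr i P x : Inv w tr -> x \in commits_sorted tr i P -> has_com w x.
Proof.
move=> I /beta_in [l [_ Hc]]; have [h [z Hin]] := icomlog I Hc.
by have [t Ht] := proj1 (In_onth _ _) Hin; exists t, i, l, h, z.
Qed.


Lemma caseA w tr k o o' : Inv w tr -> uniq (invoked_ops tr) -> completes_before tr o o' ->
  o \in confirms tr k -> o' \in confirms tr k ->
  index o' (confirms tr k) < index o (confirms tr k) -> False.
Proof.
move=> I Hu Hcb Ho Ho' Hlt.
set C := confirms tr k in Ho Ho' Hlt.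
have [V [_ HV _ _]] := iview I k.
have Ha : index o C < size C by rewrite index_mem.
have Ha' : index o' C < size C by rewrite index_mem.
have [j Hc] := conf_nth o I Ha; rewrite nth_index // in Hc.
have [j' Hc'] := conf_nth o' I Ha'; rewrite nth_index // in Hc'.
have [t [h [z [Ht _ _ Hpre]]]] := conf_pos I HV Hc.
have [t2 [h2 [z2 [_ Ht2 _ _]]]] := conf_pos I HV Hc'.
have Hm : (o', j') \in take (index o C).+1 V.
  have : (o', j') \in take (index o' C).+1 V by rewrite Ht2 mem_rcons mem_head.
  rewrite -(take_takel V (ltnW Hlt : (index o' C).+1 <= (index o C).+1)).
  by apply: mem_take.
have [t' [Hlt' Ht']] := Hpre _ Hm.
exact: temporal I Hu Hcb Ht' Ht Hlt'.
Qed.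

Lemma caseB w tr i k omax lmax o o' l : Inv w tr -> uniq (invoked_ops tr) ->
  completes_before tr o o' ->
  committed tr i omax lmax -> confirmed_by tr k omax ->
  List.In (OCommit Rsp i o l) tr -> lmax < l ->
  o' \in take (index omax (confirms tr k)).+1 (confirms tr k) -> False.
Proof.
move=> I Hu Hcb Hcm [q0 [j0 Hcf]] Hco Hl Ho'.
set C := confirms tr k in Ho'.
have [V [_ HV _ _]] := iview I k.
have Hom : omax \in C by apply: conf_in Hcf.
set am := index omax C.
have Ham : am < size C by rewrite index_mem.
have [jm Hcm'] := conf_nth omax I Ham; rewrite nth_index // in Hcm'.
have [tm [hm [zm [Htm _ _ Hpre]]]] := conf_pos I HV Hcm'.
have [phi [H1 _]] := iphi I.
have [e [Fe Ke]] := H1 _ _ Htm; simpl in Ke; subst e.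
have [b Hb] := proj1 (In_onth _ _) Hcm.
have Eb := icuniq I Fe Hb; rewrite Eb Hb in Fe; case: Fe => Ei Elm.
have Ho'C : o' \in C by apply: mem_take Ho'.
have Ha' : index o' C < am.+1 by apply: index_ltn.
have Ha's : index o' C < size C by rewrite index_mem.
have [j' Hc'] := conf_nth o' I Ha's; rewrite nth_index // in Hc'.
have [t2 [h2 [z2 [_ Ht2 _ _]]]] := conf_pos I HV Hc'.
have Hm : (o', j') \in take am.+1 V.
  have : (o', j') \in take (index o' C).+1 V by rewrite Ht2 mem_rcons mem_head.
  rewrite -(take_takel V (Ha' : (index o' C).+1 <= am.+1)).
  by apply: mem_take.
have [t' [Hlt' Ht']] := Hpre _ Hm.
have [ho [zo Hino]] := icomlog I Hco.
have [to Hto] := proj1 (In_onth _ _) Hino.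
rewrite -Ei in Htm.
case: (ltngtP tm to) => Hcmp.
- exact: temporal I Hu Hcb Ht' Hto (ltn_trans Hlt' Hcmp).
- have := imono I Hcmp Hto Htm; rewrite -Elm; move: Hl; lia.
- subst to; rewrite Htm in Hto.
  have := congr1 (fun e => if e is Some (_, PCom _ l _ _) then l else 0) Hto.
  by rewrite /= -Elm; move: Hl; lia.
Qed.

Lemma caseC w tr i P o o' : Inv w tr -> uniq (invoked_ops tr) -> completes_before tr o o' ->
  o <> o' -> o \in commits_sorted tr i P -> o' \in commits_sorted tr i P ->
  index o' (commits_sorted tr i P) < index o (commits_sorted tr i P) -> False.
Proof.
move=> I Hu Hcb Hne Ho Ho' Hlt.
move: Ho Ho' Hlt; rewrite /commits_sorted.
set S := sort _ _ => Ho Ho' Hlt.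
have Hb : index o [seq x.1 | x <- S] < size S by rewrite -(size_map fst) index_mem.
have Hb' : index o' [seq x.1 | x <- S] < size S by rewrite -(size_map fst) index_mem.
set eb := nth (o, 0) S (index o [seq x.1 | x <- S]).
set eb' := nth (o, 0) S (index o' [seq x.1 | x <- S]).
have E1 : eb.1 = o by rewrite /eb -(nth_map (o, 0) o fst Hb) nth_index.
have E1' : eb'.1 = o' by rewrite /eb' -(nth_map (o, 0) o fst Hb') nth_index.
have Hsort : sorted (fun a b : Op * nat => a.2 <= b.2) S.
  by apply: sort_sorted => a b; exact: leq_total.
have Hle : eb'.2 <= eb.2.
  have Htr : transitive (fun a b : Op * nat => a.2 <= b.2) by move=> y x z; apply: leq_trans.
  have Hrf : reflexive (fun a b : Op * nat => a.2 <= b.2) by move=> x; apply: leqnn.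
  exact: (sorted_leq_nth Htr Hrf (o, 0) Hsort _ _ Hb' Hb (ltnW Hlt)).
have Hin : forall e, e \in S -> List.In (OCommit Rsp i e.1 e.2) tr.
  move=> [y l]; rewrite mem_sort mem_filter => /andP [_ Hc]; exact: commits_in.
have [h [z Hc]] := icomlog I (Hin _ (mem_nth (o, 0) Hb)).
have [h' [z' Hc']] := icomlog I (Hin _ (mem_nth (o, 0) Hb')).
have [t Ht] := proj1 (In_onth _ _) Hc; have [t' Ht'] := proj1 (In_onth _ _) Hc'.
rewrite -/eb in Ht; rewrite -/eb' in Ht'.
case: (ltngtP t t') => Hcmp.
- by have := imono I Hcmp Ht Ht'; rewrite ltnNge Hle.
- have [L [_ _ _ HL]] := icom I Ht'.
  have Hm : (eb'.1, i) \in rcons L (eb'.1, i) by rewrite mem_rcons mem_head.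
  have [t'' [Hlt'' Ht'']] := HL _ Hm.
  rewrite E1' in Ht''; rewrite E1 in Ht.
  exact: temporal I Hu Hcb Ht'' Ht (ltn_trans Hlt'' Hcmp).
- subst t'; rewrite Ht in Ht'; case: Ht' => E _ _ _; apply: Hne; by rewrite -E1 -E1' E.
Qed.


Lemma index_eq_mem (T : eqType) (x y : T) s : x \in s -> index x s = index y s -> x = y.
Proof.
move=> Hx E; have Hy : y \in s.
  by rewrite -index_mem -E index_mem.
by rewrite -(nth_index x Hx) E nth_index.
Qed.

Lemma lt_of_not (T : eqType) (x y : T) s : x \in s -> x <> y ->
  ~~ (index x s < index y s) -> index y s < index x s.
Proof.
move=> Hx Hne; rewrite -leqNgt leq_eqVlt => /orP [/eqP E|//].
by exfalso; apply: Hne; apply: index_eq_mem Hx (esym E).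
Qed.

Lemma main_sec w tr : reachable F s0 w tr -> uniq (invoked_ops tr) ->
  forall (i : cl) (p : seq Op), cop_pi tr i p ->
  forall o o' : Op, o \in p -> o' \in p ->
    completes_before tr o o' -> index o p < index o' p.
Proof.
move=> Hr Hu; have I := Inv_reach Hr Hu.
move=> i p Hpi o o' Ho Ho' Hcb.
case: Hpi => [[omax [lmax [k [Hcm [Hcf [Hmax Ep]]]]]]|[_ Ep]]; subst p.
- set C := confirms tr k in Ho Ho' *.
  set A := take (index omax C).+1 C in Ho Ho' *.
  set B := commits_sorted tr i _ in Ho Ho' *.
  have Hcom : has_com w o.
    move: Ho; rewrite mem_cat => /orP [/mem_take HoC|HoB].
    + exact: com_of_conf I HoC.
    + exact: com_of_beta I HoB.
  have Hne := neq_cb I Hu Hcb Hcom.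
  rewrite !index_cat.
  case Hoa: (o \in A); case Ho'a: (o' \in A).
  + apply/negPn/negP => Hn.
    have Hlt := lt_of_not Hoa Hne Hn.
    rewrite /A !index_take_in // in Hlt.
    exact: caseA I Hu Hcb (mem_take Hoa) (mem_take Ho'a) Hlt.
  + by apply: leq_trans (_ : size A <= _); [rewrite index_mem | apply: leq_addr].
  + exfalso; move: Ho; rewrite mem_cat Hoa /= => /beta_in [l [Hl Hc]].
    exact: caseB I Hu Hcb Hcm Hcf Hc Hl Ho'a.
  + rewrite ltn_add2l; apply/negPn/negP => Hn.
    move: Ho Ho'; rewrite !mem_cat Hoa Ho'a /= => HoB Ho'B.
    exact: caseC I Hu Hcb Hne HoB Ho'B (lt_of_not HoB Hne Hn).
- have Hne := neq_cb I Hu Hcb (com_of_beta I Ho).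
  apply/negPn/negP => Hn.
  exact: caseC I Hu Hcb Hne Ho Ho' (lt_of_not Ho Hne Hn).
Qed.

End Main.

Theorem lemma5 (n : nat) (Op : eqType) (St Rsp : Type) (F : St -> Op -> St * Rsp)
  (s0 : St) (w : world n Op St) (tr : seq (obs n Op Rsp)) :
  reachable F s0 w tr ->
  uniq (invoked_ops tr) ->
  forall (i : 'I_n) (p : seq Op), cop_pi tr i p ->
  forall o o' : Op, o \in p -> o' \in p ->
    completes_before tr o o' -> index o p < index o' p.
Proof. exact: main_sec. Qed.
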